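(* Let $(A,\Delta,\Delta')$ be a commutative Hopf brace over a field $k$, with antipodes $S$ (for $\Delta$) and $T$ (for $\Delta'$), and let $A_{\Delta'}$ denote the Hopf algebra $(A,m,1,\Delta',\epsilon,T)$. Then $(A_{\Delta'},A_{\Delta'})$ is a Hopf matched pair with coactions $$\rho(a)=a_{(-1)}\otimes a_{(0)}=S(a_1)a_{21'}\otimes a_{22'},$$ $$\varphi(a)=a_{[0]}\otimes a_{[1]}=T(a_{1'})_{(-1)}a_{2'}\otimes T(a_{1'})_{(0)}a_{3'}=S(T(a_{1'})_1)T(a_{1'})_{21'}a_{2'}\otimes T(a_{1'})_{22'}a_{3'},$$ for all $a\in A$.
   Context: All objects are over a field $k$. A Hopf brace $(A,\Delta,\Delta')$ consists of an algebra $(A,m,1)$ with two Hopf algebra structures $(A,m,1,\Delta,\varepsilon,S)$ and $(A,m,1,\Delta',\epsilon,T)$ such that for all $h$: $h_{1'}\otimes h_{2'1}\otimes h_{2'2}=h_{11'}S(h_2)h_{31'}\otimes h_{12'}\otimes h_{32'}$; it is commutative if $A$ is commutative. Sweedler notation: $\Delta(h)=h_1\otimes h_2$, $\Delta'(h)=h_{1'}\otimes h_{2'}$ (iterated $h_{1'}\otimes h_{2'}\otimes h_{3'}$), $h_{21'}$ means $\Delta'$ applied to $h_2$. Hopf matched pair: for Hopf algebras $A$ and $H$, a pair $(A,H)$ with linear maps $\rho:A\to H\otimes A$, $\rho(a)=a_{(-1)}\otimes a_{(0)}$, and $\varphi:H\to H\otimes A$, $\varphi(h)=h_{[0]}\otimes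 h_{[1]}$, such that $(A,\rho)$ is a left $H$-comodule algebra, $(H,\varphi)$ is a right $A$-comodule algebra (coactions are algebra maps), and for all $a\in A,h\in H$ (with comultiplications of $A$ and $H$ both written $x_1\otimes x_2$): (HM1) $a_{(-1)}\varepsilon_A(a_{(0)})=\varepsilon_A(a)1_H$, $\varepsilon_H(h_{[0]})h_{[1]}=\varepsilon_H(h)1_A$; (HM2) $a_{(-1)}\otimes a_{(0)1}\otimes a_{(0)2}=a_{1(-1)}a_{2(-1)[0]}\otimes a_{1(0)}a_{2(-1)[1]}\otimes a_{2(0)}$; (HM3) $h_{[0]1}\otimes h_{[0]2}\otimes h_{[1]}=h_{1[0]}\otimes h_{1[1](-1)}h_{2[0]}\otimes h_{1[1](0)}h_{2[1]}$; (HM4) $h_{[0]}a_{(-1)}\otimes h_{[1]}a_{(0)}=a_{(-1)}h_{[0]}\otimes a_{(0)}h_{[1]}$. In the claim both $A$ and $H$ are $A_{\Delta'}$, so their comultiplication is $\Delta'$. *)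

(* Defs.v *)
(* Hopf algebras over a field K, with tensors encoded as
   formal sums and equality in the tensor product given by its universal
   property (agreement under every bi/trilinear map into every K-module). *)
From HB Require Import structures.
From mathcomp Require Import all_boot all_order all_algebra.
Set Implicit Arguments. Unset Strict Implicit. Unset Printing Implicit Defensive.
Import GRing.Theory.
Local Open Scope ring_scope.

Section Tensors.
Variable K : fieldType.

Definition tbind (X Y : Type) (s : seq X) (f : X -> seq Y) : seq Y :=
  flatten (map f s).

Definition bilin (V W U : lmodType K) (b : V -> W -> U) : Prop :=
  (forall w c x y, b (c *: x + y) w = c *: b x w + b y w) /\
  (forall v c x y, b v (c *: x + y) = c *: b v x + b v y).

Definition trilin (V W X U : lmodType K) (t : V -> W -> X -> U) : Prop :=
  (forall w z c x y, t (c *: x + y) w z = c *: t x w z + t y w z) /\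
  (forall v z c x y, t v (c *: x + y) z = c *: t v x z + t v y z) /\
  (forall v w c x y, t v w (c *: x + y) = c *: t v w x + t v w y).

Definition teq2 (V W : lmodType K) (s t : seq (V * W)) : Prop :=
  forall (U : lmodType K) (b : V -> W -> U), bilin b ->
    \sum_(p <- s) b p.1 p.2 = \sum_(p <- t) b p.1 p.2.

Definition teq3 (V W X : lmodType K) (s t : seq (V * W * X)) : Prop :=
  forall (U : lmodType K) (f : V -> W -> X -> U), trilin f ->
    \sum_(p <- s) f p.1.1 p.1.2 p.2 = \sum_(p <- t) f p.1.1 p.1.2 p.2.

Definition tlinear2 (A V W : lmodType K) (F : A -> seq (V * W)) : Prop :=
  forall c x y, teq2 (F (c *: x + y))
    (map (fun p => (c *: p.1, p.2)) (F x) ++ F y).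

Record is_hopf (A : algType K) (D : A -> seq (A * A)) (e : A -> K)
    (S : A -> A) : Prop := IsHopf {
  hopf_D_linear : tlinear2 D;
  hopf_e_linear : forall c x y, e (c *: x + y) = c * e x + e y;
  hopf_S_linear : forall c x y, S (c *: x + y) = c *: S x + S y;
  hopf_coassoc : forall h,
    teq3 (tbind (D h) (fun p => map (fun q => (q.1, q.2, p.2)) (D p.1)))
         (tbind (D h) (fun p => map (fun q => (p.1, q.1, q.2)) (D p.2)));
  hopf_counitl : forall h, \sum_(p <- D h) e p.1 *: p.2 = h;
  hopf_counitr : forall h, \sum_(p <- D h) e p.2 *: p.1 = h;
  hopf_D_mul : forall x y, teq2 (D (x * y))
    (tbind (D x) (fun p => map (fun q => (p.1 * q.1, p.2 * q.2)) (D y)));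
  hopf_D_1 : teq2 (D 1) [:: (1, 1)];
  hopf_e_mul : forall x y, e (x * y) = e x * e y;
  hopf_e_1 : e 1 = 1;
  hopf_antipodel : forall h, \sum_(p <- D h) S p.1 * p.2 = (e h)%:A;
  hopf_antipoder : forall h, \sum_(p <- D h) p.1 * S p.2 = (e h)%:A
}.

(* Hopf brace (A, D, D'): Hopf structures (D, e, S) and (D', e', T) on the
   same algebra with
   h_{1'} (x) h_{2'1} (x) h_{2'2} = h_{11'} S(h_2) h_{31'} (x) h_{12'} (x) h_{32'} *)
Record is_hopf_brace (A : algType K)
    (D : A -> seq (A * A)) (e : A -> K) (S : A -> A)
    (D' : A -> seq (A * A)) (e' : A -> K) (T : A -> A) : Prop := IsHopfBrace {
  brace_hopf : is_hopf D e S;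
  brace_hopf' : is_hopf D' e' T;
  brace_compat : forall h, teq3
    (tbind (D' h) (fun p => map (fun q => (p.1, q.1, q.2)) (D p.2)))
    (tbind (D h) (fun p => tbind (D p.1) (fun q =>
       (* q.1 = h_1, q.2 = h_2, p.2 = h_3 *)
       tbind (D' q.1) (fun r => map (fun u =>
          (r.1 * S q.2 * u.1, r.2, u.2)) (D' p.2)))))
}.

Record is_hopf_matched_pair (A H : algType K)
    (DA : A -> seq (A * A)) (eA : A -> K)
    (DH : H -> seq (H * H)) (eH : H -> K)
    (rho : A -> seq (H * A)) (phi : H -> seq (H * A)) : Prop := IsHMP {
  (* (A, rho) is a left H-comodule algebra *)
  mp_rho_linear : tlinear2 rho;
  mp_rho_coassoc : forall a, teq3
    (tbind (rho a) (fun p => map (fun q => (q.1, q.2, p.2)) (DH p.1)))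
    (tbind (rho a) (fun p => map (fun q => (p.1, q.1, q.2)) (rho p.2)));
  mp_rho_counit : forall a, \sum_(p <- rho a) eH p.1 *: p.2 = a;
  mp_rho_mul : forall a b, teq2 (rho (a * b))
    (tbind (rho a) (fun p => map (fun q => (p.1 * q.1, p.2 * q.2)) (rho b)));
  mp_rho_1 : teq2 (rho 1) [:: (1, 1)];
  (* (H, phi) is a right A-comodule algebra *)
  mp_phi_linear : tlinear2 phi;
  mp_phi_coassoc : forall h, teq3
    (tbind (phi h) (fun p => map (fun q => (q.1, q.2, p.2)) (phi p.1)))
    (tbind (phi h) (fun p => map (fun q => (p.1, q.1, q.2)) (DA p.2)));
  mp_phi_counit : forall h, \sum_(p <- phi h) eA p.2 *: p.1 = h;
  mp_phi_mul : forall h g, teq2 (phi (h * g))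
    (tbind (phi h) (fun p => map (fun q => (p.1 * q.1, p.2 * q.2)) (phi g)));
  mp_phi_1 : teq2 (phi 1) [:: (1, 1)];
  mp_HM1_rho : forall a, \sum_(p <- rho a) eA p.2 *: p.1 = (eA a)%:A;
  mp_HM1_phi : forall h, \sum_(p <- phi h) eH p.1 *: p.2 = (eH h)%:A;
  mp_HM2 : forall a, teq3
    (tbind (rho a) (fun p => map (fun q => (p.1, q.1, q.2)) (DA p.2)))
    (tbind (DA a) (fun p => tbind (rho p.1) (fun x => tbind (rho p.2) (fun z =>
       map (fun w => (x.1 * w.1, x.2 * w.2, z.2)) (phi z.1)))));
  mp_HM3 : forall h, teq3
    (tbind (phi h) (fun p => map (fun q => (q.1, q.2, p.2)) (DH p.1)))
    (tbind (DH h) (fun p => tbind (phi p.1) (fun x => tbind (phi p.2) (fun z =>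
       map (fun w => (x.1, w.1 * z.1, w.2 * z.2)) (rho x.2)))));
  mp_HM4 : forall a h, teq2
    (tbind (phi h) (fun x => map (fun u => (x.1 * u.1, x.2 * u.2)) (rho a)))
    (tbind (phi h) (fun x => map (fun u => (u.1 * x.1, u.2 * x.2)) (rho a)))
}.

Definition brace_rho (A : algType K) (D D' : A -> seq (A * A)) (S : A -> A)
    (a : A) : seq (A * A) :=
  tbind (D a) (fun p => map (fun q => (S p.1 * q.1, q.2)) (D' p.2)).

(* phi(a) = T(a_{1'})_{(-1)} a_{2'} (x) T(a_{1'})_{(0)} a_{3'},
   with a_{1'} (x) a_{2'} (x) a_{3'} = (D' (x) id) D'(a) *)
Definition brace_phi (A : algType K) (D D' : A -> seq (A * A)) (S T : A -> A)
    (a : A) : seq (A * A) :=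
  tbind (D' a) (fun p => tbind (D' p.1) (fun q =>
    map (fun r => (r.1 * q.2, r.2 * p.2)) (brace_rho D D' S (T q.1)))).

End Tensors.

(* Main.v *)
Require Import Defs.
From HB Require Import structures.
From mathcomp Require Import all_boot all_order all_algebra.
From mathcomp Require Import ring.
From Stdlib Require Import FunctionalExtensionality Setoid Morphisms.
Set Implicit Arguments. Unset Strict Implicit. Unset Printing Implicit Defensive.
Import GRing.Theory.
Local Open Scope ring_scope.

Section Gen.
Variable K : fieldType.
Variable A : comAlgType K.

Lemma big_tbind (X Y : Type) (U : nmodType) (s : seq X) (f : X -> seq Y) (F : Y -> U) :
  \sum_(p <- tbind s f) F p = \sum_(x <- s) \sum_(p <- f x) F p.
Proof. by rewrite /tbind big_flatten /= big_map. Qed.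

Definition lin (V U : lmodType K) (f : V -> U) :=
  forall c x y, f (c *: x + y) = c *: f x + f y.

Lemma lin0 (V U : lmodType K) (f : V -> U) : lin f -> f 0 = 0.
Proof.
move=> H; have E := H 1 0 0; rewrite !scale1r addr0 in E.
by apply: (@addrI _ (f 0)); rewrite addr0 -E.
Qed.

Lemma linZ (V U : lmodType K) (f : V -> U) c x : lin f -> f (c *: x) = c *: f x.
Proof. by move=> H; rewrite -[c *: x]addr0 H (lin0 H) addr0. Qed.

Lemma linD (V U : lmodType K) (f : V -> U) x y : lin f -> f (x + y) = f x + f y.
Proof. by move=> H; have := H 1 x y; rewrite !scale1r. Qed.

Lemma lin_sum (V U : lmodType K) (f : V -> U) (I : Type) (r : seq I) (F : I -> V) :
  lin f -> f (\sum_(i <- r) F i) = \sum_(i <- r) f (F i).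
Proof.
move=> H; elim: r => [|i r IH]; first by rewrite !big_nil (lin0 H).
by rewrite !big_cons linD // IH.
Qed.

Lemma bilin_l (V W U : lmodType K) (g : V -> W -> U) w : bilin g -> lin (g^~ w).
Proof. by case=> H1 _ c x y; apply: H1. Qed.
Lemma bilin_r (V W U : lmodType K) (g : V -> W -> U) v : bilin g -> lin (g v).
Proof. by case=> _ H2 c x y; apply: H2. Qed.
Lemma trilin_1 (V W X U : lmodType K) (g : V -> W -> X -> U) w z : trilin g -> lin (fun v => g v w z).
Proof. by case=> H1 _ c x y; apply: H1. Qed.
Lemma trilin_2 (V W X U : lmodType K) (g : V -> W -> X -> U) v z : trilin g -> lin (fun w => g v w z).
Proof. by case=> _ [H2 _] c x y; apply: H2. Qed.
Lemma trilin_3 (V W X U : lmodType K) (g : V -> W -> X -> U) v w : trilin g -> lin (g v w).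
Proof. by case=> _ [_ H3] c x y; apply: H3. Qed.

Lemma bilinP (V W U : lmodType K) (g : V -> W -> U) :
  (forall w, lin (g^~ w)) -> (forall v, lin (g v)) -> bilin g.
Proof. by move=> H1 H2; split=> *; [apply: H1|apply: H2]. Qed.

Lemma trilinP (V W X U : lmodType K) (f : V -> W -> X -> U) :
  (forall w z, lin (fun v => f v w z)) -> (forall v z, lin (fun w => f v w z)) ->
  (forall v w, lin (f v w)) -> trilin f.
Proof. by move=> H1 H2 H3; split; [|split] => *; [apply: H1|apply: H2|apply: H3]. Qed.

Lemma lin_id (V : lmodType K) : lin (fun v : V => v).
Proof. by []. Qed.

Lemma lin_sum2 (V U : lmodType K) (I : Type) (r : seq I) (F : V -> I -> U) :
  (forall i, lin (fun v => F v i)) -> lin (fun v => \sum_(i <- r) F v i).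
Proof.
move=> HF c x y; rewrite scaler_sumr -big_split; apply: eq_bigr => i _; exact: HF.
Qed.

Lemma lin_mulr (V : lmodType K) (F : V -> A) (b : A) : lin F -> lin (fun v => F v * b).
Proof. by move=> HF c x y; rewrite HF mulrDl scalerAl. Qed.

Lemma lin_mull (V : lmodType K) (F : V -> A) (b : A) : lin F -> lin (fun v => b * F v).
Proof. by move=> HF c x y; rewrite HF mulrDr scalerAr. Qed.

Lemma lin_comp (V W U : lmodType K) (G : W -> U) (F : V -> W) :
  lin G -> lin F -> lin (fun v => G (F v)).
Proof. by move=> HG HF c x y; rewrite HF HG. Qed.

Lemma lin_scale (V U : lmodType K) (F : V -> U) (k : K) : lin F -> lin (fun v => k *: F v).
Proof. by move=> HF c x y; rewrite HF scalerDr !scalerA mulrC. Qed.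

Ltac lin_auto_with t :=
  repeat first [ exact: lin_id | apply: lin_sum2 => ? | apply: lin_mulr | apply: lin_mull
               | apply: lin_scale | t ].
Ltac lin_auto := lin_auto_with fail.

Section Hopf.
Variables (D : A -> seq (A * A)) (e : A -> K) (S : A -> A).
Hypothesis H : is_hopf D e S.

Lemma sumD_lin (U : lmodType K) (g : A -> A -> U) c x y : bilin g ->
  \sum_(p <- D (c *: x + y)) g p.1 p.2 =
  c *: \sum_(p <- D x) g p.1 p.2 + \sum_(p <- D y) g p.1 p.2.
Proof.
move=> Hg; rewrite (hopf_D_linear H c x y Hg) big_cat /= big_map scaler_sumr.
by congr (_ + _); apply: eq_bigr => p _; rewrite (linZ _ _ (bilin_l _ Hg)).
Qed.

Lemma lin_sumD (U : lmodType K) (g : A -> A -> U) : bilin g ->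
  lin (fun x => \sum_(p <- D x) g p.1 p.2).
Proof. by move=> Hg c x y; apply: sumD_lin. Qed.

Lemma coassoc_cps (U : lmodType K) (f : A -> A -> A -> U) h : trilin f ->
  \sum_(p <- D h) \sum_(q <- D p.1) f q.1 q.2 p.2 =
  \sum_(p <- D h) \sum_(q <- D p.2) f p.1 q.1 q.2.
Proof.
move=> Hf; have := hopf_coassoc H h Hf; rewrite !big_tbind.
by under eq_bigr do rewrite big_map; under [RHS]eq_bigr do rewrite big_map.
Qed.

Lemma mul_cps (U : lmodType K) (g : A -> A -> U) x y : bilin g ->
  \sum_(p <- D (x * y)) g p.1 p.2 =
  \sum_(p <- D x) \sum_(q <- D y) g (p.1 * q.1) (p.2 * q.2).
Proof.
move=> Hg; rewrite (hopf_D_mul H x y Hg) big_tbind.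
by under eq_bigr do rewrite big_map.
Qed.

Lemma one_cps (U : lmodType K) (g : A -> A -> U) : bilin g ->
  \sum_(p <- D 1) g p.1 p.2 = g 1 1.
Proof. by move=> Hg; rewrite (hopf_D_1 H Hg) big_seq1. Qed.

Lemma S_lin : lin S.
Proof. exact: (hopf_S_linear H). Qed.

Lemma counitl_lin (U : lmodType K) (G : A -> U) h : lin G ->
  \sum_(p <- D h) e p.1 *: G p.2 = G h.
Proof.
move=> HG; rewrite -{2}(hopf_counitl H h) lin_sum //.
by apply: eq_bigr => p _; rewrite linZ.
Qed.

Lemma counitr_lin (U : lmodType K) (G : A -> U) h : lin G ->
  \sum_(p <- D h) e p.2 *: G p.1 = G h.
Proof.
move=> HG; rewrite -{2}(hopf_counitr H h) lin_sum //.
by apply: eq_bigr => p _; rewrite linZ.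
Qed.

Lemma antipodel_lin (U : lmodType K) (G : A -> U) h : lin G ->
  \sum_(p <- D h) G (S p.1 * p.2) = e h *: G 1.
Proof. by move=> HG; rewrite -lin_sum // (hopf_antipodel H) linZ. Qed.

Lemma antipoder_lin (U : lmodType K) (G : A -> U) h : lin G ->
  \sum_(p <- D h) G (p.1 * S p.2) = e h *: G 1.
Proof. by move=> HG; rewrite -lin_sum // (hopf_antipoder H) linZ. Qed.

Lemma e_lin c x y : e (c *: x + y) = c * e x + e y.
Proof. exact: (hopf_e_linear H). Qed.

Lemma S1 : S 1 = 1.
Proof.
have := hopf_antipodel H 1; rewrite (hopf_e_1 H) scale1r.
have Hg : bilin (fun u v : A => S u * v).
  split=> [w c x y|v c x y]; first by rewrite S_lin mulrDl scalerAl.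
  by rewrite mulrDr scalerAr.
by rewrite (one_cps Hg) mulr1.
Qed.


Lemma bilin_Smul : bilin (fun u v : A => S u * v).
Proof.
apply: bilinP => [w|v]; first by apply: lin_mulr; exact: S_lin.
exact: lin_mull.
Qed.

Lemma Smul x y : S (x * y) = S x * S y.
Proof.
have C1 u v : \sum_(p <- D u) \sum_(q <- D v) S (p.1 * q.1) * (p.2 * q.2) = (e u * e v) *: 1.
  by rewrite -(mul_cps _ _ bilin_Smul) (hopf_antipodel H) (hopf_e_mul H).
have E1 : S x * S y = \sum_(p <- D x) \sum_(q <- D y)
    (\sum_(a <- D p.1) \sum_(b <- D q.1) S (a.1 * b.1) * (a.2 * b.2)) * (S p.2 * S q.2).
  rewrite -[S x](counitl_lin x S_lin) -[S y](counitl_lin y S_lin) mulr_suml.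
  apply: eq_bigr => p _; rewrite mulr_sumr; apply: eq_bigr => q _.
  by rewrite C1 mulr_algl -scalerAl -scalerAr scalerA.
rewrite E1; clear E1 C1.
under eq_bigr do under eq_bigr do rewrite mulr_suml; under eq_bigr do rewrite exchange_big /=.
under eq_bigr do under eq_bigr do under eq_bigr do rewrite mulr_suml.
rewrite (coassoc_cps (f := fun a1 a2 p2 => \sum_(i <- D y) \sum_(i0 <- D i.1)
     S (a1 * i0.1) * (a2 * i0.2) * (S p2 * S i.2))); last first.
  by apply: trilinP => [w z|v z|v w]; lin_auto_with ltac:(first [exact: S_lin | apply: (lin_comp S_lin)]).
under eq_bigr do rewrite exchange_big /=.
rewrite exchange_big /=.
under eq_bigr do under eq_bigr do rewrite exchange_big /=.
under eq_bigr do rewrite exchange_big /=.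
rewrite (coassoc_cps (f := fun b1 b2 q2 => \sum_(p <- D x) \sum_(q <- D p.2)
     S (p.1 * b1) * (q.1 * b2) * (S q.2 * S q2))); last first.
  by apply: trilinP => [w z|v z|v w]; lin_auto_with ltac:(first [exact: S_lin | apply: (lin_comp S_lin)]).
under eq_bigr do rewrite exchange_big /=.
transitivity (\sum_(i <- D y) \sum_(p <- D x) S (p.1 * i.1) * ((e p.2)%:A * (e i.2)%:A)); last first.
  apply: eq_bigr => i _; apply: eq_bigr => p _.
  rewrite -(hopf_antipoder H) -(hopf_antipoder H) mulr_suml mulr_sumr exchange_big /=.
  apply: eq_bigr => j _; rewrite mulr_sumr mulr_sumr; apply: eq_bigr => q _.
  ring.
transitivity (\sum_(i <- D y) \sum_(p <- D x) S ((e p.2 *: p.1) * (e i.2 *: i.1))); last first.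
  apply: eq_bigr => i _; apply: eq_bigr => p _.
  rewrite -scalerAl -scalerAr !(linZ _ _ S_lin) scalerA -mulr_algl -(mulr_algl (e p.2)) -(mulr_algl (e i.2)).
  by rewrite !mulr1 [S _ * _]mulrC -mulrA !mulr_algl scalerA.
under eq_bigr do rewrite -(lin_sum _ _ S_lin).
rewrite -(lin_sum _ _ S_lin); congr (S _).
rewrite exchange_big /= -{1}(hopf_counitr H x) -{1}(hopf_counitr H y) mulr_suml.
by apply: eq_bigr => p _; rewrite mulr_sumr.
Qed.

End Hopf.
End Gen.

Ltac lin_auto_with t :=
  repeat first [ exact: lin_id | apply: lin_sum2 => ? | apply: lin_mulr | apply: lin_mull
               | apply: lin_scale | t ].
Ltac lin_auto := lin_auto_with fail.

Section Brace.
Variable K : fieldType.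
Variable A : comAlgType K.
Variables (D : A -> seq (A * A)) (e : A -> K) (S : A -> A).
Variables (D' : A -> seq (A * A)) (e' : A -> K) (T : A -> A).
Hypothesis HB : is_hopf_brace D e S D' e' T.
Let HD := brace_hopf HB.
Let HD' := brace_hopf' HB.

Lemma compat_cps (U : lmodType K) (f : A -> A -> A -> U) h : trilin f ->
  \sum_(p <- D' h) \sum_(q <- D p.2) f p.1 q.1 q.2 =
  \sum_(p <- D h) \sum_(q <- D p.1) \sum_(r <- D' q.1) \sum_(u <- D' p.2)
      f (r.1 * S q.2 * u.1) r.2 u.2.
Proof.
move=> Hf; have := brace_compat HB h Hf; rewrite !big_tbind.
under eq_bigr do rewrite big_map.
under [RHS]eq_bigr do (rewrite big_tbind; under eq_bigr do
   (rewrite big_tbind; under eq_bigr do rewrite big_map)).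
by [].
Qed.

Lemma lin_escale (ee : A -> K) (w : A) :
  (forall c x y, ee (c *: x + y) = c * ee x + ee y) -> lin (fun v => ee v *: w).
Proof. by move=> He c x y; rewrite He scalerDl scalerA. Qed.

Lemma escale (ee : A -> K) c x :
  (forall c x y, ee (c *: x + y) = c * ee x + ee y) -> ee (c *: x) = c * ee x.
Proof.
move=> He; have H0 : ee 0 = 0.
  have E := He 1 0 0; rewrite !scale1r addr0 mul1r in E.
  by apply: (@addrI _ (ee 0)); rewrite addr0 -E.
by rewrite -[c *: x]addr0 He H0 addr0.
Qed.

Lemma esum (ee : A -> K) (I : Type) (r : seq I) (F : I -> A) :
  (forall c x y, ee (c *: x + y) = c * ee x + ee y) ->
  ee (\sum_(i <- r) F i) = \sum_(i <- r) ee (F i).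
Proof.
move=> He; have H0 : ee 0 = 0.
  have E := He 1 0 0; rewrite !scale1r addr0 mul1r in E.
  by apply: (@addrI _ (ee 0)); rewrite addr0 -E.
elim: r => [|i r IH]; first by rewrite !big_nil.
by rewrite !big_cons -[F i]scale1r He mul1r IH scale1r.
Qed.

Lemma ee' : forall h, e' h = e h.
Proof.
pose fv v := \sum_(r <- D' v) e r.2 *: r.1.
have fv_lin : lin fv.
  apply: (lin_sumD HD' (g := fun x y => e y *: x)); apply: bilinP => [w|v]; first exact: lin_scale.
  exact: lin_escale (e_lin HD).
have Hfv h : h = fv h.
  have Hf : trilin (fun x y z : A => e y *: (e' z *: x)).
    apply: trilinP => [w z|v z|v w]; first by do 2 apply: lin_scale.
      by apply: lin_escale (e_lin HD).
    move=> c x y; rewrite (e_lin HD') scalerDl scalerDr !scalerA.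
    by rewrite mulrCA.
  have := compat_cps h Hf.
  have Hl (p : A * A) : lin (fun v => e' v *: p.1) by apply: lin_escale (e_lin HD').
  under eq_bigr => p _ do rewrite (counitl_lin HD _ (Hl p)).
  rewrite (hopf_counitr HD' h) => E; rewrite [LHS]E; clear E.
  under eq_bigr => p _ do under eq_bigr => q _ do under eq_bigr => r _ do
    under eq_bigr => u _ do rewrite scalerA [e _ * _]mulrC -scalerA.
  have Hl2 (r q : A * A) : lin (fun v => e r.2 *: (r.1 * S q.2 * v)).
    by apply: lin_scale; apply: lin_mull.
  under eq_bigr => p _ do under eq_bigr => q _ do under eq_bigr => r _ do
    rewrite (counitr_lin HD' _ (Hl2 r q)).
  have E (q p : A * A) : \sum_(r <- D' q.1) e r.2 *: (r.1 * S q.2 * p.2) = fv q.1 * S q.2 * p.2.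
    by rewrite /fv !mulr_suml; apply: eq_bigr => r _; rewrite !scalerAl.
  under eq_bigr => p _ do under eq_bigr => q _ do rewrite E.
  rewrite (coassoc_cps HD (f := fun a b c => fv a * S b * c)); last first.
    by apply: trilinP => [w z|v z|v w]; lin_auto_with ltac:(first [exact: (S_lin HD) | apply: (lin_comp (S_lin HD)) | exact: fv_lin]).
  have Hl3 (p : A * A) : lin (fun v => fv p.1 * v) by apply: lin_mull.
  under eq_bigr => p _ do under eq_bigr => q _ do rewrite -mulrA.
  under eq_bigr => p _ do rewrite (antipodel_lin HD _ (Hl3 p)) mulr1.
  exact (counitr_lin HD h fv_lin).
move=> h; rewrite [in LHS](Hfv h) /fv (esum _ _ (e_lin HD')).
rewrite -{2}(hopf_counitl HD' h) (esum _ _ (e_lin HD)).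
by apply: eq_bigr => r _; rewrite (escale _ _ (e_lin HD)) (escale _ _ (e_lin HD')) mulrC.
Qed.

End Brace.

Inductive term : Type :=
  V0 | V1 | V2 | One | Mul of term & term | Inv of term | Circ of term & term | Bar of term.

Fixpoint subst (w s0 s1 s2 : term) : term :=
  match w with
  | V0 => s0 | V1 => s1 | V2 => s2 | One => One
  | Mul a b => Mul (subst a s0 s1 s2) (subst b s0 s1 s2)
  | Circ a b => Circ (subst a s0 s1 s2) (subst b s0 s1 s2)
  | Inv a => Inv (subst a s0 s1 s2)
  | Bar a => Bar (subst a s0 s1 s2)
  end.

Section Ev.
Variable K : fieldType.
Variable A : comAlgType K.
Variables (D : A -> seq (A * A)) (e : A -> K) (S : A -> A).
Variables (D' : A -> seq (A * A)) (e' : A -> K) (T : A -> A).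
Hypothesis HB : is_hopf_brace D e S D' e' T.
Let HD := brace_hopf HB.
Let HD' := brace_hopf' HB.

Definition tri := (A * A * A)%type.
Definition tm (u v : tri) : tri := (u.1.1 * v.1.1, u.1.2 * v.1.2, u.2 * v.2).
Definition t1 : tri := (1, 1, 1).

Fixpoint ev (U : lmodType K) (w : term) (a : A) (g : tri -> U) {struct w} : U :=
  match w with
  | V0 => g (a, 1, 1)
  | V1 => g (1, a, 1)
  | V2 => g (1, 1, a)
  | One => e a *: g t1
  | Mul w1 w2 => \sum_(p <- D a) ev w1 p.1 (fun u => ev w2 p.2 (fun v => g (tm u v)))
  | Circ w1 w2 => \sum_(p <- D' a) ev w1 p.1 (fun u => ev w2 p.2 (fun v => g (tm u v)))
  | Inv w => ev w (S a) g
  | Bar w => ev w (T a) g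
  end.

Definition shift (U : lmodType K) (w : term) (b : A) (g : tri -> U) :=
  fun u => ev w b (fun v => g (tm u v)).

Definition addc (U : lmodType K) (c : K) (G H : tri -> U) :=
  fun u => c *: G u + H u.

Definition tlin (U : lmodType K) (g : tri -> U) := trilin (fun x y z => g (x, y, z)).

Lemma tmA u v t : tm (tm u v) t = tm u (tm v t).
Proof. by rewrite /tm /= !mulrA. Qed.
Lemma tmC u v : tm u v = tm v u.
Proof. by rewrite /tm /= [u.1.1 * _]mulrC [u.1.2 * _]mulrC [u.2 * _]mulrC. Qed.
Lemma tmCA u v t : tm u (tm v t) = tm v (tm u t).
Proof. by rewrite -!tmA [tm u v]tmC. Qed.
Lemma tmAC u v t : tm (tm u v) t = tm (tm u t) v.
Proof. by rewrite !tmA [tm v t]tmC. Qed.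
Lemma tm1 u : tm u t1 = u.
Proof. by case: u => [[x y] z]; rewrite /tm /= !mulr1. Qed.
Lemma tm1l u : tm t1 u = u.
Proof. by case: u => [[x y] z]; rewrite /tm /= !mul1r. Qed.

Lemma ev_ext (U : lmodType K) w a (g g' : tri -> U) :
  (forall u, g u = g' u) -> ev w a g = ev w a g'.
Proof. by move=> E; rewrite (functional_extensionality _ _ E). Qed.

Lemma evMul (U : lmodType K) w1 w2 a (g : tri -> U) :
  ev (Mul w1 w2) a g = \sum_(p <- D a) ev w1 p.1 (shift w2 p.2 g).
Proof. by []. Qed.

Lemma evCirc (U : lmodType K) w1 w2 a (g : tri -> U) :
  ev (Circ w1 w2) a g = \sum_(p <- D' a) ev w1 p.1 (shift w2 p.2 g).
Proof. by []. Qed.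

Lemma ev_addc (U : lmodType K) w a c (G H : tri -> U) :
  ev w a (addc c G H) = c *: ev w a G + ev w a H.
Proof.
elim: w a G H => [||||w1 IH1 w2 IH2|w IH|w1 IH1 w2 IH2|w IH] a G H //=.
- by rewrite /addc scalerDr !scalerA mulrC.
- have E p : shift w2 p (addc c G H) = addc c (shift w2 p G) (shift w2 p H).
    apply: functional_extensionality => u; rewrite /shift /addc.
    exact: (IH2 p (fun v => G (tm u v)) (fun v => H (tm u v))).
  under eq_bigr do rewrite -/(shift w2 _ _) E IH1.
  by rewrite big_split /= scaler_sumr.
- have E p : shift w2 p (addc c G H) = addc c (shift w2 p G) (shift w2 p H).
    apply: functional_extensionality => u; rewrite /shift /addc.
    exact: (IH2 p (fun v => G (tm u v)) (fun v => H (tm u v))).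
  under eq_bigr do rewrite -/(shift w2 _ _) E IH1.
  by rewrite big_split /= scaler_sumr.
Qed.

Lemma ev_zero (U : lmodType K) w a : ev w a (fun _ => 0 : U) = 0.
Proof.
have E : (fun _ => 0 : U) = addc 1 (fun _ => 0) (fun _ => 0).
  by apply: functional_extensionality => u; rewrite /addc scale1r addr0.
have := ev_addc w a 1 (fun _ => 0 : U) (fun _ => 0); rewrite -E scale1r => E2.
by apply: (@addrI _ (ev w a (fun _ => 0 : U))); rewrite addr0 -E2.
Qed.

Lemma ev_scalec (U : lmodType K) w a c (G : tri -> U) :
  ev w a (fun u => c *: G u) = c *: ev w a G.
Proof.
have E : (fun u => c *: G u) = addc c G (fun _ => 0).
  by apply: functional_extensionality => u; rewrite /addc addr0.
by rewrite E ev_addc ev_zero addr0.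
Qed.

Lemma ev_sumc (U : lmodType K) (I : Type) (r : seq I) w a (F : I -> tri -> U) :
  ev w a (fun u => \sum_(i <- r) F i u) = \sum_(i <- r) ev w a (F i).
Proof.
elim: r => [|i r IH].
  rewrite [RHS]big_nil; transitivity (ev w a (fun _ => 0 : U)); last exact: ev_zero.
  by apply: ev_ext => u; rewrite big_nil.
have E : (fun u => \sum_(j <- i :: r) F j u) = addc 1 (F i) (fun u => \sum_(j <- r) F j u).
  by apply: functional_extensionality => u; rewrite /addc big_cons scale1r.
by rewrite E ev_addc scale1r IH big_cons.
Qed.

Lemma ev_swap (U : lmodType K) w w' a b (G : tri -> tri -> U) :
  ev w a (fun u => ev w' b (fun v => G u v)) = ev w' b (fun v => ev w a (fun u => G u v)).
Proof.
elim: w a G => [||||w1 IH1 w2 IH2|w0 IH|w1 IH1 w2 IH2|w0 IH] a G //=.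
- by rewrite -ev_scalec.
- transitivity (\sum_(p <- D a) ev w1 p.1 (fun u => ev w' b (fun v =>
      ev w2 p.2 (fun x => G (tm u x) v)))).
    by apply: eq_bigr => p _; apply: ev_ext => u; exact: IH2.
  under eq_bigr do rewrite IH1.
  by rewrite -ev_sumc.
- transitivity (\sum_(p <- D' a) ev w1 p.1 (fun u => ev w' b (fun v =>
      ev w2 p.2 (fun x => G (tm u x) v)))).
    by apply: eq_bigr => p _; apply: ev_ext => u; exact: IH2.
  under eq_bigr do rewrite IH1.
  by rewrite -ev_sumc.
Qed.

Lemma tlin_mulc (U : lmodType K) (g : tri -> U) u : tlin g -> tlin (fun v => g (tm u v)).
Proof.
move=> Hg; apply: trilinP => [w z|v z|v w] c x y; rewrite /tm /=.
- by rewrite mulrDr -scalerAr (trilin_1 _ _ Hg).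
- by rewrite mulrDr -scalerAr (trilin_2 _ _ Hg).
- by rewrite mulrDr -scalerAr (trilin_3 _ _ Hg).
Qed.

Lemma tlin_shift (U : lmodType K) w b (g : tri -> U) : tlin g -> tlin (shift w b g).
Proof.
move=> Hg; apply: trilinP => [w2 z|v z|v w2] c x y; rewrite /shift -ev_addc;
  apply: ev_ext => t; rewrite /addc /tm /= mulrDl -scalerAl.
- exact: (trilin_1 _ _ Hg).
- exact: (trilin_2 _ _ Hg).
- exact: (trilin_3 _ _ Hg).
Qed.

Lemma ev_lin_arg (U : lmodType K) w (g : tri -> U) c x y : tlin g ->
  ev w (c *: x + y) g = c *: ev w x g + ev w y g.
Proof.
elim: w g c x y => [||||w1 IH1 w2 IH2|w0 IH|w1 IH1 w2 IH2|w0 IH] g c x y Hg /=.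
- exact: (trilin_1 _ _ Hg).
- exact: (trilin_2 _ _ Hg).
- exact: (trilin_3 _ _ Hg).
- by rewrite (e_lin HD) scalerDl scalerA.
- have Bi : bilin (fun p1 p2 => ev w1 p1 (shift w2 p2 g)).
    apply: bilinP => [p2|p1] c' x' y'; first by apply: IH1; apply: tlin_shift.
    have -> : shift w2 (c' *: x' + y') g = addc c' (shift w2 x' g) (shift w2 y' g).
      by apply: functional_extensionality => u; rewrite /shift IH2 //; apply: tlin_mulc.
    by rewrite ev_addc.
  exact: (sumD_lin HD c x y Bi).
- by rewrite (S_lin HD) IH.
- have Bi : bilin (fun p1 p2 => ev w1 p1 (shift w2 p2 g)).
    apply: bilinP => [p2|p1] c' x' y'; first by apply: IH1; apply: tlin_shift.
    have -> : shift w2 (c' *: x' + y') g = addc c' (shift w2 x' g) (shift w2 y' g).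
      by apply: functional_extensionality => u; rewrite /shift IH2 //; apply: tlin_mulc.
    by rewrite ev_addc.
  exact: (sumD_lin HD' c x y Bi).
- by rewrite (S_lin HD') IH.
Qed.

Lemma shift_lin_arg (U : lmodType K) w (g : tri -> U) c x y : tlin g ->
  shift w (c *: x + y) g = addc c (shift w x g) (shift w y g).
Proof.
by move=> Hg; apply: functional_extensionality => u; rewrite /shift ev_lin_arg //; apply: tlin_mulc.
Qed.

Lemma bilin_evshift (U : lmodType K) w1 w2 (g : tri -> U) : tlin g ->
  bilin (fun p1 p2 => ev w1 p1 (shift w2 p2 g)).
Proof.
move=> Hg; apply: bilinP => [p2|p1] c x y; first by apply: ev_lin_arg; apply: tlin_shift.
by rewrite shift_lin_arg // ev_addc.
Qed.

Lemma ev_one (U : lmodType K) w (g : tri -> U) : tlin g -> ev w 1 g = g t1.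
Proof.
elim: w g => [||||w1 IH1 w2 IH2|w0 IH|w1 IH1 w2 IH2|w0 IH] g Hg /=.
- by [].
- by [].
- by [].
- by rewrite (hopf_e_1 HD) scale1r.
- rewrite (one_cps HD (bilin_evshift w1 w2 Hg)) IH1; last exact: tlin_shift.
  by rewrite /shift IH2 ?tm1 //; apply: tlin_mulc.
- by rewrite (S1 HD) IH.
- rewrite (one_cps HD' (bilin_evshift w1 w2 Hg)) IH1; last exact: tlin_shift.
  by rewrite /shift IH2 ?tm1 //; apply: tlin_mulc.
- by rewrite (S1 HD') IH.
Qed.

Lemma ev_mul (U : lmodType K) w (g : tri -> U) a b : tlin g ->
  ev w (a * b) g = ev w a (shift w b g).
Proof.
elim: w g a b => [||||w1 IH1 w2 IH2|w0 IH|w1 IH1 w2 IH2|w0 IH] g a b Hg.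
- by rewrite /shift /tm /= !mulr1.
- by rewrite /shift /tm /= !mulr1.
- by rewrite /shift /tm /= !mulr1.
- by rewrite /shift /= tm1 (hopf_e_mul HD) scalerA.
- rewrite !evMul (mul_cps HD _ _ (bilin_evshift _ _ Hg)).
  apply: eq_bigr => p _.
  transitivity (\sum_(q <- D b) ev w1 p.1 (fun u => ev w1 q.1 (fun u' => ev w2 p.2 (fun v =>
     ev w2 q.2 (fun v' => g (tm (tm u u') (tm v v'))))))).
    apply: eq_bigr => q _; rewrite IH1; last exact: tlin_shift.
    apply: ev_ext => u; rewrite /shift; apply: ev_ext => u'.
    by rewrite IH2; last exact: tlin_mulc.
  symmetry; rewrite /shift /=.
  under ev_ext => u do rewrite ev_sumc.
  rewrite ev_sumc; apply: eq_bigr => q _; apply: ev_ext => u; rewrite ev_swap.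
  apply: ev_ext => u'; apply: ev_ext => v; apply: ev_ext => v'.
  by rewrite !tmA (tmCA v).
- by rewrite /= (Smul HD) IH.
- rewrite !evCirc (mul_cps HD' _ _ (bilin_evshift _ _ Hg)).
  apply: eq_bigr => p _.
  transitivity (\sum_(q <- D' b) ev w1 p.1 (fun u => ev w1 q.1 (fun u' => ev w2 p.2 (fun v =>
     ev w2 q.2 (fun v' => g (tm (tm u u') (tm v v'))))))).
    apply: eq_bigr => q _; rewrite IH1; last exact: tlin_shift.
    apply: ev_ext => u; rewrite /shift; apply: ev_ext => u'.
    by rewrite IH2; last exact: tlin_mulc.
  symmetry; rewrite /shift /=.
  under ev_ext => u do rewrite ev_sumc.
  rewrite ev_sumc; apply: eq_bigr => q _; apply: ev_ext => u; rewrite ev_swap.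
  apply: ev_ext => u'; apply: ev_ext => v; apply: ev_ext => v'.
  by rewrite !tmA (tmCA v).
- by rewrite /= (Smul HD') IH.
Qed.

Lemma shift_addc (U : lmodType K) w b c (G H : tri -> U) :
  shift w b (addc c G H) = addc c (shift w b G) (shift w b H).
Proof.
apply: functional_extensionality => u; rewrite /shift /addc.
exact: (ev_addc w b c (fun v => G (tm u v)) (fun v => H (tm u v))).
Qed.

Lemma shift_sumc (U : lmodType K) (I : Type) (r : seq I) w b (F : I -> tri -> U) :
  shift w b (fun u => \sum_(i <- r) F i u) = fun u => \sum_(i <- r) shift w b (F i) u.
Proof.
apply: functional_extensionality => u; rewrite /shift.
exact: (ev_sumc r w b (fun i v => F i (tm u v))).
Qed.

Lemma shift_swap (U : lmodType K) w b w' b' (G : tri -> U) :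
  shift w b (shift w' b' G) = shift w' b' (shift w b G).
Proof.
apply: functional_extensionality => u; rewrite /shift ev_swap.
by apply: ev_ext => t; apply: ev_ext => v; rewrite tmAC.
Qed.

Lemma shift_Mul (U : lmodType K) y z b (g : tri -> U) :
  shift (Mul y z) b g = fun u => \sum_(q <- D b) shift y q.1 (shift z q.2 g) u.
Proof.
apply: functional_extensionality => u; rewrite /shift /=.
by apply: eq_bigr => q _; apply: ev_ext => v; apply: ev_ext => t; rewrite tmA.
Qed.

Lemma shift_Circ (U : lmodType K) y z b (g : tri -> U) :
  shift (Circ y z) b g = fun u => \sum_(q <- D' b) shift y q.1 (shift z q.2 g) u.
Proof.
apply: functional_extensionality => u; rewrite /shift /=.
by apply: eq_bigr => q _; apply: ev_ext => v; apply: ev_ext => t; rewrite tmA.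
Qed.

Lemma trilin_ev3 (U : lmodType K) x y z (g : tri -> U) : tlin g ->
  trilin (fun a b c => ev x a (shift y b (shift z c g))).
Proof.
move=> Hg; apply: trilinP => [b c|a c|a b] k u v.
- by apply: ev_lin_arg; do 2 apply: tlin_shift.
- by rewrite shift_lin_arg ?ev_addc //; apply: tlin_shift.
- by rewrite shift_lin_arg // shift_addc ev_addc.
Qed.

Lemma lin_ev (U : lmodType K) w (g : tri -> U) : tlin g -> lin (fun b => ev w b g).
Proof. by move=> Hg c x y; apply: ev_lin_arg. Qed.

Definition equiv w w' := forall (U : lmodType K) a (g : tri -> U), tlin g -> ev w a g = ev w' a g.

Lemma equiv_refl : Reflexive equiv.
Proof. by move=> w U a g. Qed.
Lemma equiv_sym : Symmetric equiv.
Proof. by move=> w w' H U a g Hg; rewrite H. Qed.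
Lemma equiv_trans : Transitive equiv.
Proof. by move=> w1 w2 w3 H1 H2 U a g Hg; rewrite H1 // H2. Qed.

Lemma shift_equiv (U : lmodType K) w w' b (g : tri -> U) : equiv w w' -> tlin g ->
  shift w b g = shift w' b g.
Proof.
move=> H Hg; apply: functional_extensionality => u; rewrite /shift H //; exact: tlin_mulc.
Qed.

Lemma Mul_equiv x x' y y' : equiv x x' -> equiv y y' -> equiv (Mul x y) (Mul x' y').
Proof.
move=> Hx Hy U a g Hg; rewrite !evMul; apply: eq_bigr => p _.
by rewrite (shift_equiv _ Hy Hg) Hx //; apply: tlin_shift.
Qed.
Lemma Circ_equiv x x' y y' : equiv x x' -> equiv y y' -> equiv (Circ x y) (Circ x' y').
Proof.
move=> Hx Hy U a g Hg; rewrite !evCirc; apply: eq_bigr => p _.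
by rewrite (shift_equiv _ Hy Hg) Hx //; apply: tlin_shift.
Qed.
Lemma Inv_equiv x x' : equiv x x' -> equiv (Inv x) (Inv x').
Proof. by move=> Hx U a g Hg /=; rewrite Hx. Qed.
Lemma Bar_equiv x x' : equiv x x' -> equiv (Bar x) (Bar x').
Proof. by move=> Hx U a g Hg /=; rewrite Hx. Qed.

Lemma emulA x y z : equiv (Mul (Mul x y) z) (Mul x (Mul y z)).
Proof.
move=> U a g Hg; rewrite !evMul.
under [RHS]eq_bigr do rewrite shift_Mul ev_sumc.
transitivity (\sum_(p <- D a) \sum_(q <- D p.1) ev x q.1 (shift y q.2 (shift z p.2 g))).
  by apply: eq_bigr => p _; rewrite evMul.
exact: (coassoc_cps HD a (trilin_ev3 x y z Hg)).
Qed.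

Lemma ecircA x y z : equiv (Circ (Circ x y) z) (Circ x (Circ y z)).
Proof.
move=> U a g Hg; rewrite !evCirc.
under [RHS]eq_bigr do rewrite shift_Circ ev_sumc.
transitivity (\sum_(p <- D' a) \sum_(q <- D' p.1) ev x q.1 (shift y q.2 (shift z p.2 g))).
  by apply: eq_bigr => p _; rewrite evCirc.
exact: (coassoc_cps HD' a (trilin_ev3 x y z Hg)).
Qed.

Lemma emul1l x : equiv (Mul One x) x.
Proof.
move=> U a g Hg /=; rewrite -[RHS](counitl_lin HD a (lin_ev x Hg)).
by apply: eq_bigr => p _; congr (_ *: _); apply: ev_ext => v; rewrite tm1l.
Qed.

Lemma emul1r x : equiv (Mul x One) x.
Proof.
move=> U a g Hg /=; rewrite -[RHS](counitr_lin HD a (lin_ev x Hg)).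
apply: eq_bigr => p _; rewrite -ev_scalec; apply: ev_ext => v; by rewrite tm1.
Qed.

Lemma ecirc1l x : equiv (Circ One x) x.
Proof.
move=> U a g Hg /=; rewrite -[RHS](counitl_lin HD' a (lin_ev x Hg)).
by apply: eq_bigr => p _; rewrite (ee' HB) //; congr (_ *: _); apply: ev_ext => v; rewrite tm1l.
Qed.

Lemma ecirc1r x : equiv (Circ x One) x.
Proof.
move=> U a g Hg /=; rewrite -[RHS](counitr_lin HD' a (lin_ev x Hg)).
apply: eq_bigr => p _; rewrite (ee' HB) // -ev_scalec; apply: ev_ext => v; by rewrite tm1.
Qed.

Lemma emulVl x : equiv (Mul (Inv x) x) One.
Proof.
move=> U a g Hg; rewrite evMul /=.
under eq_bigr do rewrite -ev_mul //.
by rewrite (antipodel_lin HD a (lin_ev x Hg)) ev_one.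
Qed.

Lemma emulVr x : equiv (Mul x (Inv x)) One.
Proof.
move=> U a g Hg; rewrite evMul /=.
have E p : shift (Inv x) p g = shift x (S p) g by [].
under eq_bigr do rewrite E -ev_mul //.
by rewrite (antipoder_lin HD a (lin_ev x Hg)) ev_one.
Qed.

Lemma ecircVl x : equiv (Circ (Bar x) x) One.
Proof.
move=> U a g Hg; rewrite evCirc /=.
under eq_bigr do rewrite -ev_mul //.
by rewrite (antipodel_lin HD' a (lin_ev x Hg)) ev_one // (ee' HB).
Qed.

Lemma ecircVr x : equiv (Circ x (Bar x)) One.
Proof.
move=> U a g Hg; rewrite evCirc /=.
have E p : shift (Bar x) p g = shift x (T p) g by [].
under eq_bigr do rewrite E -ev_mul //.
by rewrite (antipoder_lin HD' a (lin_ev x Hg)) ev_one // (ee' HB).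
Qed.

Lemma brace_law x y z :
  equiv (Circ x (Mul y z)) (Mul (Mul (Circ x y) (Inv x)) (Circ x z)).
Proof.
move=> U a g Hg; rewrite evCirc.
under eq_bigr do rewrite shift_Mul ev_sumc.
rewrite (compat_cps HB a (trilin_ev3 x y z Hg)) evMul.
apply: eq_bigr => p _; rewrite evMul; apply: eq_bigr => q _; rewrite evCirc.
apply: eq_bigr => r _.
rewrite shift_Circ.
have E : shift (Inv x) q.2 = shift x (S q.2) by [].
rewrite E shift_sumc shift_sumc ev_sumc; apply: eq_bigr => u _.
rewrite !ev_mul; try by repeat apply: tlin_shift.
by rewrite [shift x u.1 _]shift_swap [shift x (S q.2) _]shift_swap.
Qed.

#[local] Instance equiv_Equiv : Equivalence equiv :=
  Build_Equivalence _ equiv_refl equiv_sym equiv_trans.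
#[local] Instance Mul_Proper : Proper (equiv ==> equiv ==> equiv) Mul.
Proof. by move=> x x' Hx y y' Hy; apply: Mul_equiv. Qed.
#[local] Instance Circ_Proper : Proper (equiv ==> equiv ==> equiv) Circ.
Proof. by move=> x x' Hx y y' Hy; apply: Circ_equiv. Qed.
#[local] Instance Inv_Proper : Proper (equiv ==> equiv) Inv.
Proof. by move=> x x' Hx; apply: Inv_equiv. Qed.
#[local] Instance Bar_Proper : Proper (equiv ==> equiv) Bar.
Proof. by move=> x x' Hx; apply: Bar_equiv. Qed.

Lemma inv1 : equiv (Inv One) One.
Proof. by rewrite -{1}(emul1r (Inv One)) emulVl. Qed.

Lemma bar1 : equiv (Bar One) One.
Proof. by rewrite -{1}(ecirc1r (Bar One)) ecircVl. Qed.

Lemma emulKl x y : equiv (Mul (Inv x) (Mul x y)) y.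
Proof. by rewrite -emulA emulVl emul1l. Qed.
Lemma emulKr x y : equiv (Mul x (Mul (Inv x) y)) y.
Proof. by rewrite -emulA emulVr emul1l. Qed.
Lemma ecircKl x y : equiv (Circ (Bar x) (Circ x y)) y.
Proof. by rewrite -ecircA ecircVl ecirc1l. Qed.
Lemma ecircKr x y : equiv (Circ x (Circ (Bar x) y)) y.
Proof. by rewrite -ecircA ecircVr ecirc1l. Qed.

Lemma inv_uniq a b : equiv (Mul a b) One -> equiv a (Inv b).
Proof.
by move=> H; rewrite -(emul1r a) -(emulVr b) -emulA H emul1l.
Qed.

Lemma circ_cancel a b c : equiv (Circ a b) (Circ a c) -> equiv b c.
Proof. by move=> H; rewrite -(ecircKl a b) H ecircKl. Qed.

Definition lam x y := Mul (Inv x) (Circ x y).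
Definition mu y x := Circ (Circ (Bar (lam x y)) x) y.

#[local] Instance lam_Proper : Proper (equiv ==> equiv ==> equiv) lam.
Proof. by move=> x x' Hx y y' Hy; rewrite /lam Hx Hy. Qed.
#[local] Instance mu_Proper : Proper (equiv ==> equiv ==> equiv) mu.
Proof. by move=> x x' Hx y y' Hy; rewrite /mu Hx Hy. Qed.

Lemma D1 x y : equiv (Circ x y) (Mul x (lam x y)).
Proof. by rewrite /lam emulKr. Qed.

Lemma D2 x y z : equiv (lam x (Mul y z)) (Mul (lam x y) (lam x z)).
Proof. by rewrite /lam brace_law !emulA. Qed.

Lemma D3 x : equiv (lam x One) One.
Proof. by rewrite /lam ecirc1r emulVl. Qed.

Lemma D5 y : equiv (lam One y) y.
Proof. by rewrite /lam inv1 ecirc1l emul1l. Qed.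

Lemma Dinv x y : equiv (Inv (Circ x y)) (Mul (Mul (Inv x) (Circ x (Inv y))) (Inv x)).
Proof.
symmetry; apply: inv_uniq.
have H : equiv (Mul (Circ x (Inv y)) (Mul (Inv x) (Circ x y))) x.
  by rewrite -emulA -brace_law emulVl ecirc1r.
by rewrite !emulA H emulVl.
Qed.

Lemma D4 x y z : equiv (lam (Circ x y) z) (lam x (lam y z)).
Proof.
rewrite /lam Dinv brace_law -ecircA.
by rewrite !emulA.
Qed.

Lemma D6 x y : equiv (Circ (lam x y) (mu y x)) (Circ x y).
Proof. by rewrite /mu ecircA ecircKr. Qed.

Lemma mu1 x : equiv (mu One x) x.
Proof. by rewrite /mu D3 bar1 ecirc1l ecirc1r. Qed.

Lemma mu_1 y : equiv (mu y One) One.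
Proof. by rewrite /mu D5 ecirc1r ecircVl. Qed.

Lemma HM2_t x y z : equiv (lam x (Circ y z)) (Circ (lam x y) (lam (mu y x) z)).
Proof.
rewrite (D1 (lam x y) (lam (mu y x) z)) -D4 D6.
by rewrite (D1 y z) D2 -D4.
Qed.

Lemma HMd_t x y z : equiv (mu z (mu y x)) (mu (Circ y z) x).
Proof.
apply: (@circ_cancel (lam x (Circ y z))).
rewrite D6 HM2_t ecircA D6 -ecircA D6 ecircA.
reflexivity.
Qed.

Lemma HM3_t x y z : equiv (mu z (Circ x y)) (Circ (mu (lam y z) x) (mu z y)).
Proof.
apply: (@circ_cancel (lam (Circ x y) z)).
by rewrite D6 D4 -ecircA D6 !ecircA D6.
Qed.

Lemma shift_one (U : lmodType K) w (g : tri -> U) : tlin g -> shift w 1 g = g.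
Proof.
move=> Hg; apply: functional_extensionality => u; rewrite /shift ev_one ?tm1 //.
exact: tlin_mulc.
Qed.

Lemma shift_mul (U : lmodType K) w (g : tri -> U) a b : tlin g ->
  shift w (a * b) g = shift w a (shift w b g).
Proof.
move=> Hg; apply: functional_extensionality => u; rewrite /shift ev_mul; last exact: tlin_mulc.
by apply: ev_ext => v; apply: ev_ext => t; rewrite tmA.
Qed.

Definition subc (U : lmodType K) (s0 s1 s2 : term) (g : tri -> U) :=
  fun u : tri => ev s0 u.1.1 (shift s1 u.1.2 (shift s2 u.2 g)).

Lemma tlin_subc (U : lmodType K) s0 s1 s2 (g : tri -> U) : tlin g -> tlin (subc s0 s1 s2 g).
Proof.
move=> Hg; apply: trilinP => [y z|x z|x y] c a b; rewrite /subc /=.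
- by apply: ev_lin_arg; do 2 apply: tlin_shift.
- by rewrite shift_lin_arg ?ev_addc //; apply: tlin_shift.
- by rewrite shift_lin_arg // shift_addc ev_addc.
Qed.

Lemma subc_shift (U : lmodType K) w s0 s1 s2 b (g : tri -> U) : tlin g ->
  (forall b' (g' : tri -> U), tlin g' ->
     ev (subst w s0 s1 s2) b' g' = ev w b' (subc s0 s1 s2 g')) ->
  subc s0 s1 s2 (shift (subst w s0 s1 s2) b g) = shift w b (subc s0 s1 s2 g).
Proof.
move=> Hg IH; apply: functional_extensionality => [[[u1 u2] u3]]; rewrite /subc /=.
set W := subst w s0 s1 s2.
rewrite [shift s2 u3 (shift W b g)]shift_swap [shift s1 u2 (shift W b _)]shift_swap.
set G := shift s1 u2 (shift s2 u3 g).
have HG : tlin G by do 2 apply: tlin_shift.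
transitivity (ev W b (shift s0 u1 G)).
  rewrite /shift ev_swap; apply: ev_ext => v; apply: ev_ext => t; by rewrite tmC.
rewrite IH; last exact: tlin_shift.
rewrite /shift; apply: ev_ext => [[[v1 v2] v3]].
change (ev s0 v1 (shift s1 v2 (shift s2 v3 (shift s0 u1 G))) =
  ev s0 (u1 * v1) (shift s1 (u2 * v2) (shift s2 (u3 * v3) g))).
rewrite ev_mul; last by do 2 apply: tlin_shift.
rewrite !shift_mul; try by repeat apply: tlin_shift.
rewrite /G [shift s2 v3 (shift s0 u1 _)]shift_swap [shift s1 v2 (shift s0 u1 _)]shift_swap.
rewrite -ev_mul; last by repeat apply: tlin_shift.
rewrite mulrC ev_mul; last by repeat apply: tlin_shift.
congr (ev s0 u1 (shift s0 v1 _)).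
by rewrite [shift s2 v3 (shift s1 u2 _)]shift_swap [shift s1 v2 (shift s1 u2 _)]shift_swap
  [shift s2 v3 (shift s2 u3 _)]shift_swap.
Qed.

Lemma ev_subst (U : lmodType K) w s0 s1 s2 a (g : tri -> U) : tlin g ->
  ev (subst w s0 s1 s2) a g = ev w a (subc s0 s1 s2 g).
Proof.
elim: w a g => [||||w1 IH1 w2 IH2|w0 IH|w1 IH1 w2 IH2|w0 IH] a g Hg /=.
- by rewrite /subc /= !shift_one //; apply: tlin_shift.
- rewrite /subc /= shift_one // ev_one; last exact: tlin_shift.
  by rewrite /shift; apply: ev_ext => v; rewrite tm1l.
- rewrite /subc /= ev_one; last by do 2 apply: tlin_shift.
  rewrite shift_one; last exact: tlin_shift.
  by rewrite /shift; apply: ev_ext => v; rewrite tm1l.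
- by rewrite /subc /= !shift_one ?ev_one //; apply: tlin_shift.
- apply: eq_bigr => p _; rewrite -/(shift _ _ _) IH1; last exact: tlin_shift.
  by rewrite subc_shift.
- by rewrite IH.
- apply: eq_bigr => p _; rewrite -/(shift _ _ _) IH1; last exact: tlin_shift.
  by rewrite subc_shift.
- by rewrite IH.
Qed.

Definition Lw := lam V0 V1.
Definition Mw := mu V1 V0.
Definition Cw := Circ V0 V1.
Notation rho := (brace_rho D D' S).
Notation phi := (brace_phi D D' S T).

Lemma R_C (U : lmodType K) a (G : tri -> U) :
  ev Cw a G = \sum_(p <- D' a) G (p.1, p.2, 1).
Proof. by apply: eq_bigr => p _; rewrite /tm /= mulr1 mul1r mulr1. Qed.

Lemma R_L (U : lmodType K) a (G : tri -> U) :
  ev Lw a G = \sum_(p <- rho a) G (p.1, p.2, 1).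
Proof.
rewrite /brace_rho big_tbind; apply: eq_bigr => p _ /=; rewrite big_map.
by apply: eq_bigr => q _; rewrite /tm /= !mulr1 !mul1r.
Qed.

Lemma R_M (U : lmodType K) a (G : tri -> U) :
  ev Mw a G = \sum_(p <- phi a) G (p.1, p.2, 1).
Proof.
rewrite /brace_phi big_tbind; apply: eq_bigr => p _ /=; rewrite big_tbind.
apply: eq_bigr => q _ /=; rewrite big_map.
rewrite /brace_rho big_tbind; apply: eq_bigr => r _; rewrite big_map.
by apply: eq_bigr => t _; rewrite /tm /= !mulr1 !mul1r.
Qed.

Definition gb (U : lmodType K) (b : A -> A -> U) : tri -> U := fun u => b u.1.1 (u.1.2 * u.2).
Definition gf (U : lmodType K) (f : A -> A -> A -> U) : tri -> U := fun u => f u.1.1 u.1.2 u.2.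

Lemma tlin_gb (U : lmodType K) (b : A -> A -> U) : bilin b -> tlin (gb b).
Proof.
move=> Hb; apply: trilinP => [y z|x z|x y] c u v; rewrite /gb /=.
- exact: (bilin_l _ Hb).
- by rewrite mulrDl -scalerAl (bilin_r _ Hb).
- by rewrite mulrDr -scalerAr (bilin_r _ Hb).
Qed.

Section Generic.
Variable B : term.
Variable F : A -> seq (A * A).
Hypothesis RB : forall (U : lmodType K) a (G : tri -> U),
  ev B a G = \sum_(p <- F a) G (p.1, p.2, 1).

Lemma RB2 (U : lmodType K) (b : A -> A -> U) a :
  \sum_(p <- F a) b p.1 p.2 = ev B a (gb b).
Proof. by rewrite RB; apply: eq_bigr => p _; rewrite /gb /= mulr1. Qed.

Lemma gen_lin : tlinear2 F.
Proof.
move=> c x y U b Hb; rewrite RB2 ev_lin_arg; last exact: tlin_gb.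
rewrite -!RB2 big_cat big_map scaler_sumr /=; congr (_ + _).
by apply: eq_bigr => p _; rewrite (linZ _ _ (bilin_l _ Hb)).
Qed.

Lemma gen_mul x y : teq2 (F (x * y))
  (tbind (F x) (fun p => map (fun q => (p.1 * q.1, p.2 * q.2)) (F y))).
Proof.
move=> U b Hb; rewrite RB2 ev_mul; last exact: tlin_gb.
rewrite RB big_tbind; apply: eq_bigr => p _; rewrite big_map /shift RB.
by apply: eq_bigr => q _; rewrite /gb /tm /= !mulr1.
Qed.

Lemma gen_one : teq2 (F 1) [:: (1, 1)].
Proof.
move=> U b Hb; rewrite RB2 ev_one; last exact: tlin_gb.
by rewrite big_seq1 /gb /= mulr1.
Qed.

Lemma chain s0 s1 s2 (U : lmodType K) (g : tri -> U) a : tlin g ->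
  \sum_(p <- F a) subc s0 s1 s2 g (p.1, p.2, 1) = ev (subst B s0 s1 s2) a g.
Proof. by move=> Hg; rewrite ev_subst // RB. Qed.

End Generic.

Definition G0 : tri -> A := fun u => u.1.1 * u.1.2 * u.2.
Lemma tlin_G0 : tlin G0.
Proof. by apply: trilinP => *; rewrite /G0 /=; lin_auto. Qed.

Lemma subc_One1 x y : subc One V0 One G0 (x, y, 1) = e x *: y.
Proof. by rewrite /subc /shift /= (hopf_e_1 HD) scale1r /G0 /tm /= ?mulr1 ?mul1r ?mulr1. Qed.
Lemma subc_One2 x y : subc V0 One One G0 (x, y, 1) = e y *: x.
Proof. by rewrite /subc /shift /= (hopf_e_1 HD) scale1r /G0 /tm /= ?mulr1 ?mul1r ?mulr1. Qed.

Lemma rho_counit a : \sum_(p <- rho a) e' p.1 *: p.2 = a.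
Proof.
transitivity (\sum_(p <- rho a) subc One V0 One G0 (p.1, p.2, 1)).
  by apply: eq_bigr => p _; rewrite subc_One1 (ee' HB).
rewrite (chain R_L _ _ _ _ tlin_G0); change (ev (lam One V0) a G0 = a).
by rewrite (@D5 V0 _ a G0 tlin_G0) /= /G0 !mulr1.
Qed.

Lemma rho_HM1 a : \sum_(p <- rho a) e' p.2 *: p.1 = (e' a)%:A.
Proof.
transitivity (\sum_(p <- rho a) subc V0 One One G0 (p.1, p.2, 1)).
  by apply: eq_bigr => p _; rewrite subc_One2 (ee' HB).
rewrite (chain R_L _ _ _ _ tlin_G0); change (ev (lam V0 One) a G0 = (e' a)%:A).
by rewrite (@D3 V0 _ a G0 tlin_G0) /= /G0 !mulr1 (ee' HB).
Qed.

Lemma phi_counit a : \sum_(p <- phi a) e' p.2 *: p.1 = a.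
Proof.
transitivity (\sum_(p <- phi a) subc V0 One One G0 (p.1, p.2, 1)).
  by apply: eq_bigr => p _; rewrite subc_One2 (ee' HB).
rewrite (chain R_M _ _ _ _ tlin_G0); change (ev (mu One V0) a G0 = a).
by rewrite (@mu1 V0 _ a G0 tlin_G0) /= /G0 !mulr1.
Qed.

Lemma phi_HM1 a : \sum_(p <- phi a) e' p.1 *: p.2 = (e' a)%:A.
Proof.
transitivity (\sum_(p <- phi a) subc One V0 One G0 (p.1, p.2, 1)).
  by apply: eq_bigr => p _; rewrite subc_One1 (ee' HB).
rewrite (chain R_M _ _ _ _ tlin_G0); change (ev (mu V0 One) a G0 = (e' a)%:A).
by rewrite (@mu_1 V0 _ a G0 tlin_G0) /= /G0 !mulr1 (ee' HB).
Qed.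

Lemma subc_at (U : lmodType K) s0 s1 s2 (g : tri -> U) x y z :
  subc s0 s1 s2 g (x, y, z) = ev s0 x (shift s1 y (shift s2 z g)).
Proof. by []. Qed.

Lemma shift_at (U : lmodType K) w b (g : tri -> U) u :
  shift w b g u = ev w b (fun v => g (tm u v)).
Proof. by []. Qed.

Lemma subc12 (U : lmodType K) (G : tri -> U) x y : tlin G -> subc V1 V2 One G (x, y, 1) = G (1, x, y).
Proof. by move=> HG; rewrite /subc shift_one // /shift /tm /= !mulr1 !mul1r. Qed.

Lemma R12 B F (RB : forall (U : lmodType K) a (G : tri -> U), ev B a G = \sum_(p <- F a) G (p.1, p.2, 1))
  (U : lmodType K) y (G : tri -> U) : tlin G ->
  ev (subst B V1 V2 One) y G = \sum_(p <- F y) G (1, p.1, p.2).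
Proof. by move=> HG; rewrite ev_subst // RB; apply: eq_bigr => p _; rewrite subc12. Qed.

Lemma rho_coassoc a : teq3
    (tbind (rho a) (fun p => map (fun q => (q.1, q.2, p.2)) (D' p.1)))
    (tbind (rho a) (fun p => map (fun q => (p.1, q.1, q.2)) (rho p.2))).
Proof.
move=> U f Hf; have Hg : tlin (gf f) := Hf.
rewrite [LHS]big_tbind [RHS]big_tbind.
transitivity (\sum_(p <- rho a) subc Cw V2 One (gf f) (p.1, p.2, 1)).
  apply: eq_bigr => p _; rewrite big_map subc_at shift_one // R_C.
  by apply: eq_bigr => q _; rewrite /shift /gf /tm /= !mulr1 !mul1r.
rewrite (chain R_L _ _ _ _ Hg).
transitivity (ev (subst Lw V0 (lam V1 V2) One) a (gf f)); last first.
  rewrite -(chain R_L _ _ _ _ Hg); apply: eq_bigr => p _; rewrite big_map subc_at shift_one //.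
  rewrite /= /shift (R12 R_L); last exact: tlin_mulc.
  by apply: eq_bigr => q _; rewrite /gf /tm /= !mulr1 !mul1r.
exact: (@D4 V0 V1 V2 _ a (gf f) Hg).
Qed.

Lemma phi_coassoc h : teq3
    (tbind (phi h) (fun p => map (fun q => (q.1, q.2, p.2)) (phi p.1)))
    (tbind (phi h) (fun p => map (fun q => (p.1, q.1, q.2)) (D' p.2))).
Proof.
move=> U f Hf; have Hg : tlin (gf f) := Hf.
rewrite [LHS]big_tbind [RHS]big_tbind.
transitivity (\sum_(p <- phi h) subc Mw V2 One (gf f) (p.1, p.2, 1)).
  apply: eq_bigr => p _; rewrite big_map subc_at shift_one // R_M.
  by apply: eq_bigr => q _; rewrite /shift /gf /tm /= !mulr1 !mul1r.
rewrite (chain R_M _ _ _ _ Hg).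
transitivity (ev (subst Mw V0 (Circ V1 V2) One) h (gf f)); last first.
  rewrite -(chain R_M _ _ _ _ Hg); apply: eq_bigr => p _; rewrite big_map subc_at shift_one //.
  rewrite /= /shift (R12 R_C); last exact: tlin_mulc.
  by apply: eq_bigr => q _; rewrite /gf /tm /= !mulr1 !mul1r.
exact: (@HMd_t V0 V1 V2 _ h (gf f) Hg).
Qed.

Lemma HM2_f a : teq3
    (tbind (rho a) (fun p => map (fun q => (p.1, q.1, q.2)) (D' p.2)))
    (tbind (D' a) (fun p => tbind (rho p.1) (fun x => tbind (rho p.2) (fun z =>
       map (fun w => (x.1 * w.1, x.2 * w.2, z.2)) (phi z.1))))).
Proof.
move=> U f Hf; have Hg : tlin (gf f) := Hf.
rewrite [LHS]big_tbind [RHS]big_tbind.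
transitivity (ev (subst Lw V0 (Circ V1 V2) One) a (gf f)).
  rewrite -(chain R_L _ _ _ _ Hg); apply: eq_bigr => p _; rewrite big_map subc_at shift_one //.
  rewrite /= /shift (R12 R_C); last exact: tlin_mulc.
  by apply: eq_bigr => q _; rewrite /gf /tm /= !mulr1 !mul1r.
transitivity (ev (subst Cw Lw (subst Lw Mw V2 One) One) a (gf f)).
  exact: (@HM2_t V0 V1 V2 _ a (gf f) Hg).
rewrite -(chain R_C _ _ _ _ Hg); apply: eq_bigr => p _; rewrite big_tbind subc_at shift_one //.
rewrite R_L; apply: eq_bigr => x _; rewrite big_tbind /shift ev_subst; last exact: tlin_mulc.
rewrite R_L; apply: eq_bigr => z _; rewrite big_map subc_at shift_one; last exact: tlin_mulc.
rewrite R_M; apply: eq_bigr => w _.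
by rewrite /shift /gf /tm /= !mulr1 !mul1r.
Qed.

Lemma HM3_f h : teq3
    (tbind (phi h) (fun p => map (fun q => (q.1, q.2, p.2)) (D' p.1)))
    (tbind (D' h) (fun p => tbind (phi p.1) (fun x => tbind (phi p.2) (fun z =>
       map (fun w => (x.1, w.1 * z.1, w.2 * z.2)) (rho x.2))))).
Proof.
move=> U f Hf; have Hg : tlin (gf f) := Hf.
rewrite [LHS]big_tbind [RHS]big_tbind.
transitivity (ev (subst Mw Cw V2 One) h (gf f)).
  rewrite -(chain R_M _ _ _ _ Hg); apply: eq_bigr => p _; rewrite big_map subc_at shift_one // R_C.
  by apply: eq_bigr => q _; rewrite /shift /gf /tm /= !mulr1 !mul1r.
transitivity (ev (subst Cw (subst Mw V0 (lam V1 V2) One) (subst Mw V1 V2 One) One) h (gf f)).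
  exact: (@HM3_t V0 V1 V2 _ h (gf f) Hg).
rewrite -(chain R_C _ _ _ _ Hg); apply: eq_bigr => p _; rewrite big_tbind subc_at shift_one //.
rewrite ev_subst; last exact: tlin_shift.
rewrite R_M; apply: eq_bigr => x _; rewrite big_tbind subc_at shift_one; last exact: tlin_shift.
rewrite /= shift_at (R12 R_L); last exact: (tlin_mulc _ (tlin_shift _ _ Hg)).
transitivity (\sum_(w <- rho x.2) \sum_(z <- phi p.2)
   gf f (tm (tm (x.1, 1, 1) (1, w.1, w.2)) (1, z.1, z.2))).
  apply: eq_bigr => w _; rewrite shift_at (R12 R_M) //; exact: tlin_mulc.
rewrite exchange_big /=; apply: eq_bigr => z _; rewrite big_map.
apply: eq_bigr => w _.
by rewrite /gf /tm /= !mulr1 !mul1r.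
Qed.

Lemma main_mp : is_hopf_matched_pair D' e' D' e' rho phi.
Proof.
constructor.
- exact: (gen_lin R_L).
- exact: rho_coassoc.
- exact: rho_counit.
- exact: (gen_mul R_L).
- exact: (gen_one R_L).
- exact: (gen_lin R_M).
- exact: phi_coassoc.
- exact: phi_counit.
- exact: (gen_mul R_M).
- exact: (gen_one R_M).
- exact: rho_HM1.
- exact: phi_HM1.
- exact: HM2_f.
- exact: HM3_f.
- move=> a h U b Hb; rewrite [LHS]big_tbind [RHS]big_tbind; apply: eq_bigr => x _.
  rewrite !big_map; apply: eq_bigr => u _ /=; by rewrite mulrC [x.2 * _]mulrC.
Qed.

End Ev.

Theorem proposition3p3 (K : fieldType) (A : comAlgType K)
    (D : A -> seq (A * A)) (e : A -> K) (S : A -> A)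
    (D' : A -> seq (A * A)) (e' : A -> K) (T : A -> A) :
  is_hopf_brace D e S D' e' T ->
  is_hopf_matched_pair D' e' D' e' (brace_rho D D' S) (brace_phi D D' S T).
Proof. exact: main_mp. Qed.
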